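(* If a finite algebra $\mathbf{A}$ is a spread of a family of subsets on which the induced algebras have Maltsev polynomials, then $d_{\mathbf{A}}(n)\in O(n)$.
   Context: $d_{\mathbf{A}}(n)$ is the least size of a generating set of $\mathbf{A}^n$. A subset $S\subseteq A$ is a spread of a family $\mathcal U$ of subsets of $A$ if $S=p(U_1,\dots,U_k)$ for a polynomial $p$ of $\mathbf{A}$ and (not necessarily distinct) $U_i\in\mathcal U$; $\mathbf{A}$ is a spread of $\mathcal U$ if $A$ is. For $U\subseteq A$ the induced algebra $\mathbf{A}|_U$ has universe $U$ and as operations the restrictions to $U$ of the polynomials of $\mathbf{A}$ under which $U$ is closed. A Maltsev polynomial is a polynomial $m(x,y,z)$ with $m(x,y,y)=x=m(y,y,x)$. *)

(* Defs.v *)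
From Stdlib Require Import ClassicalEpsilon.
From mathcomp Require Import all_boot.

Unset Printing Implicit Defensive.

Inductive term (I : Type) (ar : I -> nat) (V : Type) : Type :=
| Var (v : V)
| App (i : I) (args : 'I_(ar i) -> term I ar V).

Arguments Var {I ar V} v.
Arguments App {I ar V} i args.

Fixpoint eval_term {T I : Type} {ar : I -> nat} {V : Type}
    (op : forall i, ('I_(ar i) -> T) -> T) (env : V -> T) (t : term I ar V) : T :=
  match t with
  | Var v => env v
  | App i args => op i (fun j => eval_term op env (args j))
  end.

(* Polynomials: terms in k variables with constants from the universe. *)
Definition poly_env {T : Type} {k : nat} (x : 'I_k -> T) (v : 'I_k + T) : T :=
  match v with inl i => x i | inr c => c end.

Definition is_polynomial {T I : Type} {ar : I -> nat}
    (op : forall i, ('I_(ar i) -> T) -> T) (k : nat) (f : ('I_k -> T) -> T) : Prop :=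
  exists t : term I ar ('I_k + T), forall x, f x = eval_term op (poly_env x) t.

Definition args3 {T : Type} (a b c : T) : 'I_3 -> T :=
  fun i => nth a [:: a; b; c] i.

Definition is_maltsev_polynomial {T I : Type} {ar : I -> nat}
    (op : forall i, ('I_(ar i) -> T) -> T) (m : ('I_3 -> T) -> T) : Prop :=
  is_polynomial op 3 m /\
  forall x y : T, m (args3 x y y) = x /\ m (args3 y y x) = x.

(* Induced algebra A|_U : universe U, operations = restrictions to U of the
   polynomials of A under which U is closed. *)
Definition closed_under {T : finType} (U : {set T}) (k : nat)
    (f : ('I_k -> T) -> T) : Prop :=
  forall x : 'I_k -> T, (forall i, x i \in U) -> f x \in U.

Definition ind_carrier {T : finType} (U : {set T}) : Type := {x : T | x \in U}.

Definition ind_idx {T : finType} {I : Type} {ar : I -> nat}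
    (op : forall i, ('I_(ar i) -> T) -> T) (U : {set T}) : Type :=
  {k : nat & {f : ('I_k -> T) -> T | is_polynomial op k f /\ closed_under U k f}}.

Definition ind_arity {T : finType} {I : Type} {ar : I -> nat}
    {op : forall i, ('I_(ar i) -> T) -> T} {U : {set T}} (j : ind_idx op U) : nat :=
  projT1 j.

Definition ind_op {T : finType} {I : Type} {ar : I -> nat}
    (op : forall i, ('I_(ar i) -> T) -> T) (U : {set T})
    (j : ind_idx op U) (args : 'I_(ind_arity j) -> ind_carrier U) : ind_carrier U :=
  exist (fun x => x \in U)
    (proj1_sig (projT2 j) (fun i => proj1_sig (args i)))
    (proj2 (proj2_sig (projT2 j)) (fun i => proj1_sig (args i))
       (fun i => proj2_sig (args i))).

Definition is_spread_of {T : finType} {I : Type} {ar : I -> nat}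
    (op : forall i, ('I_(ar i) -> T) -> T) (F : {set {set T}}) (S : {set T}) : Prop :=
  exists (k : nat) (p : ('I_k -> T) -> T) (Us : 'I_k -> {set T}),
    is_polynomial op k p /\ (forall i, Us i \in F) /\
    forall a : T, a \in S <-> exists u : 'I_k -> T, (forall i, u i \in Us i) /\ p u = a.

Definition pow_op {T : finType} {I : Type} {ar : I -> nat}
    (op : forall i, ('I_(ar i) -> T) -> T) (n : nat)
    (i : I) (args : 'I_(ar i) -> {ffun 'I_n -> T}) : {ffun 'I_n -> T} :=
  [ffun l => op i (fun j => args j l)].

Arguments pow_op {T I ar} op n i args.

(* S generates A^n: the subuniverse generated by S (= values of terms,
   without constants, at elements of S) is all of A^n. *)
Definition generates_pow {T : finType} {I : Type} {ar : I -> nat}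
    (op : forall i, ('I_(ar i) -> T) -> T) (n : nat) (S : {set {ffun 'I_n -> T}}) : Prop :=
  forall x : {ffun 'I_n -> T},
    exists (k : nat) (t : term I ar 'I_k) (s : 'I_k -> {ffun 'I_n -> T}),
      (forall j, s j \in S) /\ eval_term (pow_op op n) s t = x.

Definition has_gen_of_size {T : finType} {I : Type} {ar : I -> nat}
    (op : forall i, ('I_(ar i) -> T) -> T) (n m : nat) : Prop :=
  exists S : {set {ffun 'I_n -> T}}, #|S| = m /\ generates_pow op n S.

Arguments has_gen_of_size {T I ar} op n m.

Definition has_gen_of_sizeb {T : finType} {I : Type} {ar : I -> nat}
    (op : forall i, ('I_(ar i) -> T) -> T) (n m : nat) : bool :=
  if excluded_middle_informative (has_gen_of_size op n m) then true else false.

Lemma has_gen_exists {T : finType} {I : Type} {ar : I -> nat}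
    (op : forall i, ('I_(ar i) -> T) -> T) (n : nat) :
  exists m, has_gen_of_sizeb op n m.
Proof.
exists #|[set: {ffun 'I_n -> T}]|; rewrite /has_gen_of_sizeb.
case: excluded_middle_informative => // H; exfalso; apply: H.
exists [set: {ffun 'I_n -> T}]; split => // x.
exists 1, (Var ord0), (fun _ => x); split => //= j; exact: in_setT.
Qed.

Definition d_A {T : finType} {I : Type} {ar : I -> nat}
    (op : forall i, ('I_(ar i) -> T) -> T) (n : nat) : nat :=
  ex_minn (has_gen_exists op n).

(* Main.v *)
Require Import Defs.
From mathcomp Require Import all_boot.
From Stdlib Require Import FunctionalExtensionality ClassicalEpsilon.

Inductive gen {T : finType} {I : Type} {ar : I -> nat}
    (op : forall i, ('I_(ar i) -> T) -> T) (n : nat) (G : {set {ffun 'I_n -> T}})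
    : {ffun 'I_n -> T} -> Prop :=
| gen_base x : x \in G -> gen op n G x
| gen_app i (args : 'I_(ar i) -> {ffun 'I_n -> T}) :
    (forall j, gen op n G (args j)) -> gen op n G (pow_op op n i args).

Lemma gen_term {T : finType} {I : Type} {ar : I -> nat}
    (op : forall i, ('I_(ar i) -> T) -> T) (n : nat) (G : {set {ffun 'I_n -> T}}) x :
  gen op n G x -> exists t : term I ar 'I_#|G|,
    eval_term (pow_op op n) (fun j => enum_val j) t = x.
Proof.
elim=> [y yG | i args _ IH].
  by exists (Var (enum_rank_in yG y)); rewrite /= enum_rankK_in.
have [f Hf] := fin_all_exists IH.
exists (App i f) => /=; congr pow_op; apply: functional_extensionality => j.
exact: Hf.
Qed.

Lemma poly_gen {T : finType} {I : Type} {ar : I -> nat}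
    (op : forall i, ('I_(ar i) -> T) -> T) (n : nat) (G : {set {ffun 'I_n -> T}}) :
  (forall c, [ffun=> c] \in G) ->
  forall k (t : term I ar ('I_k + T)) (y : 'I_k -> {ffun 'I_n -> T}),
  (forall i, gen op n G (y i)) ->
  gen op n G [ffun l => eval_term op (poly_env (fun i => y i l)) t].
Proof.
move=> HG k t y Hy; elim: t => [[i|c] | i args IH] /=.
- have -> : [ffun l => y i l] = y i by apply/ffunP => l; rewrite ffunE.
  exact: Hy.
- by apply: gen_base; apply: HG.
- have -> : [ffun l => op i (fun j => eval_term op (poly_env (fun i0 => y i0 l)) (args j))]
     = pow_op op n i (fun j => [ffun l => eval_term op (poly_env (fun i0 => y i0 l)) (args j)]).
    apply/ffunP => l; rewrite /pow_op !ffunE; congr op.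
    by apply: functional_extensionality => j; rewrite ffunE.
  by apply: gen_app.
Qed.

Lemma ind_gen {T : finType} {I : Type} {ar : I -> nat}
    (op : forall i, ('I_(ar i) -> T) -> T) (n : nat) (G : {set {ffun 'I_n -> T}})
    (U : {set T}) (V : Type) (t : term (ind_idx op U) (@ind_arity T I ar op U) V)
    (e : 'I_n -> V -> ind_carrier U) :
  (forall c, [ffun=> c] \in G) ->
  (forall v, gen op n G [ffun l => proj1_sig (e l v)]) ->
  gen op n G [ffun l => proj1_sig (eval_term (ind_op op U) (e l) t)].
Proof.
move=> HG He; elim: t => [v | j args IH] /=; first exact: He.
move: args IH; case: j => k [f [[s Hs] Hcl]] args IH /=.
have -> : [ffun l => f (fun i => proj1_sig (eval_term (ind_op op U) (e l) (args i)))]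
  = [ffun l => eval_term op (poly_env (fun i =>
        [ffun l' => proj1_sig (eval_term (ind_op op U) (e l') (args i))] l)) s].
  apply/ffunP => l; rewrite !ffunE Hs; congr eval_term; congr poly_env.
  by apply: functional_extensionality => i; rewrite ffunE.
exact: poly_gen.
Qed.

Lemma maltsev_gen {T : finType} {I : Type} {ar : I -> nat}
    (op : forall i, ('I_(ar i) -> T) -> T) (n' : nat) (G : {set {ffun 'I_n'.+1 -> T}})
    (U : {set T}) m :
  is_maltsev_polynomial (ind_op op U) m ->
  (forall c, [ffun=> c] \in G) ->
  (forall (l0 : 'I_n'.+1) c d, [ffun l => if l == l0 then d else c] \in G) ->
  forall z : 'I_n'.+1 -> ind_carrier U, gen op n'.+1 G [ffun l => proj1_sig (z l)].
Proof.
move=> [[t Ht] Hm] HG HD z.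
pose c := z ord0.
suff H : forall j, j <= n'.+1 ->
    gen op n'.+1 G [ffun l : 'I_n'.+1 => proj1_sig (if (l : nat) < j then z l else c)].
  have := H n'.+1 (leqnn _).
  by have -> : [ffun l : 'I_n'.+1 => proj1_sig (if (l : nat) < n'.+1 then z l else c)]
    = [ffun l => proj1_sig (z l)] by apply/ffunP => l; rewrite !ffunE ltn_ord.
elim=> [_ | j IHj Hj].
  have -> : [ffun l : 'I_n'.+1 => proj1_sig (if (l : nat) < 0 then z l else c)]
    = [ffun=> proj1_sig c] by apply/ffunP => l; rewrite !ffunE.
  by apply: gen_base; apply: HG.
pose Y := fun l : 'I_n'.+1 => if (l : nat) < j then z l else c.
pose D := fun l : 'I_n'.+1 => if (l : nat) == j then z l else c.
have -> : [ffun l : 'I_n'.+1 => proj1_sig (if (l : nat) < j.+1 then z l else c)]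
   = [ffun l : 'I_n'.+1 => proj1_sig (eval_term (ind_op op U) (poly_env (args3 (Y l) c (D l))) t)].
  apply/ffunP => l; rewrite !ffunE -Ht /Y /D ltnS leq_eqVlt.
  case: (ltngtP l j) => Hl.
  - by rewrite orbT (Hm _ _).1 ?(ltn_eqF Hl).
  - by rewrite (Hm _ _).1.
  - by rewrite (Hm (z l) c).2.
apply: ind_gen => // [[[[|[|[|i]]] Hi] | c'] /=] //.
- exact: IHj (ltnW Hj).
- by apply: gen_base; apply: HG.
- pose j0 := Ordinal Hj.
  have -> : [ffun l => proj1_sig (D l)]
    = [ffun l => if l == j0 then proj1_sig (z j0) else proj1_sig c].
    apply/ffunP => l; rewrite !ffunE /D.
    case: (eqVneq l j0) => [-> | Hl] /=; first by rewrite eqxx.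
    have -> : ((l : nat) == j) = false by apply/negbTE; move: Hl; apply: contra => /eqP Hl'; apply/eqP; exact: val_inj.
    by [].
  by apply: gen_base; apply: HD.
- by apply: gen_base; apply: HG.
Qed.

Theorem corollary5p3 (T : finType) (I : Type) (ar : I -> nat)
    (op : forall i, ('I_(ar i) -> T) -> T) (F : {set {set T}}) :
  is_spread_of op F [set: T] ->
  (forall U : {set T}, U \in F ->
     exists m, is_maltsev_polynomial (ind_op op U) m) ->
  exists C N : nat, forall n : nat, N <= n -> d_A op n <= C * n.
Proof.
move=> [k [p [Us [[tp Htp] [HUs Hsp]]]]] HM.
exists (#|T| * #|T|), 1 => n; case: n => // n' _.
pose G := [set [ffun l => if l == q.2.1 then q.2.2 else q.1] | q in [set: T * ('I_n'.+1 * T)]].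
have HG : forall c, [ffun=> c] \in G.
  move=> c; apply/imsetP; exists (c, (ord0, c)); rewrite ?in_setT //.
  by apply/ffunP => l; rewrite !ffunE /=; case: ifP.
have HD : forall (l0 : 'I_n'.+1) c d, [ffun l => if l == l0 then d else c] \in G.
  by move=> l0 c d; apply/imsetP; exists (c, (l0, d)); rewrite ?in_setT.
have Hgen : forall x, gen op n'.+1 G x.
  move=> x.
  have [uf Huf] : exists uf : 'I_n'.+1 -> 'I_k -> T, forall l,
      (forall i, uf l i \in Us i) /\ p (uf l) = x l.
    apply: (@fin_all_exists _ (fun _ => 'I_k -> T) (fun l u => (forall i, u i \in Us i) /\ p u = x l)) => l; apply/Hsp; exact: in_setT.
  pose y := fun i => [ffun l => uf l i].
  have -> : x = [ffun l => eval_term op (poly_env (fun i => y i l)) tp].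
    apply/ffunP => l; rewrite ffunE -Htp -(Huf l).2; congr p.
    by apply: functional_extensionality => i; rewrite ffunE.
  apply: poly_gen => // i.
  have [m Hm] := HM _ (HUs i).
  have := maltsev_gen op n' G (Us i) m Hm HG HD
    (fun l => exist (fun a => a \in Us i) (uf l i) ((Huf l).1 i)).
  by have -> : [ffun l => proj1_sig (exist (fun a => a \in Us i) (uf l i) ((Huf l).1 i))] = y i
    by apply/ffunP => l; rewrite !ffunE.
rewrite /d_A; case: ex_minnP => m _ Hmin.
apply: (leq_trans (Hmin #|G| _)).
  rewrite /has_gen_of_sizeb; case: excluded_middle_informative => // [] [].
  exists G; split => // x.
  have [t Ht] := gen_term op n'.+1 G x (Hgen x).
  exists #|G|, t, (fun j => enum_val j); split => //.
  move=> j; exact: enum_valP.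
apply: (leq_trans (leq_imset_card _ _)).
by rewrite cardsT !card_prod card_ord mulnA mulnAC.
Qed.
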